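(* The $\alpha$-pass algorithm does not provide an approximation ratio better than $\frac12$ for the clique inference problem with nonnegative vertex potentials and entropy clique potentials $C(\mathbf{v})=\lambda\sum_{v\in V}n_v(\mathbf{v})\log n_v(\mathbf{v})$, $\lambda>0$: there is a family of such instances (indexed by the number of vertices $n$) on which the ratio of the score of the $\alpha$-pass output to the optimal score tends to at most $\frac12$ as $n\to\infty$.
   Context: Clique inference problem: there are $n$ vertices $1,\dots,n$, a finite set $V$ of values, real vertex potentials $\psi_{jv}$ ($1\le j\le n$, $v\in V$), and a clique potential $C$ depending only on the counts $n_v(\mathbf{v})=|\{j:v_j=v\}|$ (with $0\log 0=0$); the objective is $F(\mathbf{v})=\sum_j\psi_{jv_j}+C(\mathbf{v})$ over $\mathbf{v}\in V^n$. The $\alpha$-pass algorithm: for each $\alpha\in V$, sort the vertices in decreasing order of $\psi_{j\alpha}-\max_{v\neq\alpha}\psi_{jv}$; for each $k\in\{1,\dots,n\}$ form the assignment giving the first $k$ sorted vertices the value $\alpha$ and every other vertex a value $v\ne\alpha$ maximizing $\psi_{jv}$; output the formed assignment with the largest $F$ over all $\alpha$ and $k$. *)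

(* Defs.v *)
From HB Require Import structures.
From mathcomp Require Import all_boot all_order all_algebra.
From mathcomp Require Import reals exp.
Set Implicit Arguments. Unset Strict Implicit. Unset Printing Implicit Defensive.
Import Order.TTheory GRing.Theory Num.Theory.
Local Open Scope ring_scope.

Section CliqueInference.
Variable R : realType.
(* n vertices 'I_n, value set V = 'I_m *)
Variables (n m : nat).

Definition assignment := {ffun 'I_n -> 'I_m}.

Definition cnt (x : assignment) (v : 'I_m) : nat := #|[set j | x j == v]|.

(* entropy clique potential  C(x) = lam * sum_v n_v log n_v  (0 log 0 = 0:
   the term is n_v%:R * ln n_v%:R, which is 0 when n_v = 0) *)
Definition entropyC (lam : R) (x : assignment) : R :=
  lam * \sum_(v : 'I_m) (cnt x v)%:R * ln (cnt x v)%:R.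

Definition score (psi : 'I_n -> 'I_m -> R) (lam : R) (x : assignment) : R :=
  \sum_(j : 'I_n) psi j (x j) + entropyC lam x.

(* max_{v <> alpha} psi_{jv}; the default 0 is the true maximum for
   nonnegative potentials whenever the index set is nonempty (and is never
   used otherwise) *)
Definition maxother (psi : 'I_n -> 'I_m -> R) (alpha : 'I_m) (j : 'I_n) : R :=
  \big[Num.max/0]_(v : 'I_m | v != alpha) psi j v.

Definition apkey (psi : 'I_n -> 'I_m -> R) (alpha : 'I_m) (j : 'I_n) : R :=
  psi j alpha - maxother psi alpha j.

(* x is an assignment that the alpha-pass algorithm forms for some alpha and
   some k in {1..n}, under SOME valid tie-breaking of the sort and of the
   argmax: exactly k vertices get alpha, they are a prefix of a decreasing
   sort by apkey (every alpha-vertex has key >= every other vertex), and every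
   other vertex gets a value v <> alpha maximizing psi_{jv}. *)
Definition alphapass_candidate (psi : 'I_n -> 'I_m -> R) (x : assignment) : Prop :=
  exists (alpha : 'I_m) (k : nat),
    [/\ (1 <= k <= n)%N,
        cnt x alpha = k,
        (forall i j : 'I_n, x i = alpha -> x j <> alpha ->
           apkey psi alpha j <= apkey psi alpha i) &
        (forall j : 'I_n, x j <> alpha ->
           forall v : 'I_m, v <> alpha -> psi j v <= psi j (x j))].

End CliqueInference.

(* Main.v *)
Require Import Defs.
From HB Require Import structures.
From mathcomp Require Import all_boot all_order all_algebra.
From mathcomp Require Import reals exp.
From mathcomp Require Import lra zify.
Import Order.TTheory GRing.Theory Num.Theory.
Local Open Scope ring_scope.

Definition gg (n : nat) : nat := (\max_(i < n.+1 | (4*i)^i <= n) i)%N.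

Lemma gg_ge n i : (i <= n)%N -> ((4*i)^i <= n)%N -> (i <= gg n)%N.
Proof.
move=> hi hp. have hi' : (i < n.+1)%N by [].
exact: (@leq_bigmax_cond _ (fun i : 'I_n.+1 => (4*i)^i <= n)%N
          (fun i => nat_of_ord i) (Ordinal hi') hp).
Qed.

Lemma gg_spec n : gg n = 0%N \/ ((4 * gg n)^(gg n) <= n)%N.
Proof.
rewrite /gg; apply: (big_ind (fun x => x = 0%N \/ ((4*x)^x <= n)%N)).
- by left.
- move=> x y hx hy; rewrite /maxn; by case: ifP.
- by move=> i hi; right.
Qed.

Lemma entropy_vertex (R : realType) n m (x : assignment n m) :
  \sum_(v : 'I_m) (cnt x v)%:R * ln ((cnt x v)%:R : R)
  = \sum_(j : 'I_n) ln ((cnt x (x j))%:R : R).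
Proof.
rewrite (partition_big x predT) //=; apply: eq_bigr => v _.
rewrite (eq_bigr (fun _ => ln (cnt x v)%:R)); last by move=> j /eqP ->.
rewrite sumr_const /cnt cardsE mulr_natl.
congr (_ *+ _); apply: eq_card => j; by rewrite !inE.
Qed.

Lemma score_vertex (R : realType) n m (psi : 'I_n -> 'I_m -> R) lam x :
  score psi lam x = \sum_(j : 'I_n) (psi j (x j) + lam * ln ((cnt x (x j))%:R)).
Proof. by rewrite /score /entropyC entropy_vertex mulr_sumr -big_split. Qed.
Definition sz n := (n %/ gg n)%N.
Definition mm n := (2*n + gg n).+1%N.
Definition aa (R : realType) (n : nat) : R := 1 - (n.+1%:R)^-1.
Definition lamf (R : realType) (n : nat) : R := (ln (n.+2%:R : R))^-1.
Definition psif (R : realType) n (j : 'I_n) (v : 'I_(mm n)) : R :=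
  if (v < 2*n)%N then (if (v %% n == j)%N then 1 else 0)
  else (if (j %/ sz n == v - 2*n)%N then aa R n else 0).

Section S.
Variable R : realType.

Lemma aa_ge0 n : 0 <= aa R n.
Proof.
rewrite /aa subr_ge0 invf_le1 ?ler1n ?ltr0n //.
Qed.

Lemma aa_lt1 n : aa R n < 1.
Proof. by rewrite /aa ltrBlDr ltrDl invr_gt0 ltr0n. Qed.

Lemma lam_gt0 n : 0 < lamf R n.
Proof. by rewrite /lamf invr_gt0 ln_gt0 // ltr1n. Qed.

Lemma psif_ge0 n j v : 0 <= @psif R n j v.
Proof. rewrite /psif; repeat case: ifP => _ //; exact: aa_ge0. Qed.

Lemma psif_le1 n j v : @psif R n j v <= 1.
Proof. rewrite /psif; repeat case: ifP => _ //; exact: ltW (aa_lt1 _). Qed.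

Lemma psif_ge1 n j v : 1 <= @psif R n j v -> ((v < 2*n) && (v %% n == j))%N.
Proof.
rewrite /psif; case: ifP => h1; case: ifP => h2 //=; rewrite ?ler10 //.
by move=> h; have := aa_lt1 n; rewrite ltNge h.
Qed.


Lemma private_exists n (j : 'I_n) (alpha : 'I_(mm n)) :
  exists v : 'I_(mm n), v <> alpha /\ @psif R n j v = 1.
Proof.
have hj := ltn_ord j.
have e1 : (val (inord j : 'I_(mm n)) = j)%N.
  by apply: inordK; rewrite ltnS; lia.
have e2 : (val (inord (n + j) : 'I_(mm n)) = n + j)%N.
  by apply: inordK; rewrite ltnS; lia.
have p1 : @psif R n j (inord j) = 1.
  by rewrite /psif e1 modn_small // eqxx ifT //; lia.
have p2 : @psif R n j (inord (n + j)) = 1.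
  by rewrite /psif e2 modnDl modn_small // eqxx ifT //; lia.
case: (eqVneq (inord j : 'I_(mm n)) alpha) => [ha|ha].
- exists (inord (n + j)); split => //.
  move=> h; have : val (inord j : 'I_(mm n)) = val (inord (n+j) : 'I_(mm n)) by rewrite ha h.
  rewrite e1 e2; lia.
- by exists (inord j); split => //; apply/eqP.
Qed.

Lemma forced n (y : assignment n (mm n)) alpha
  (Hmax : forall j, y j <> alpha -> forall v, v <> alpha -> @psif R n j v <= @psif R n j (y j))
  j : y j <> alpha -> ((y j < 2*n) && (y j %% n == j))%N.
Proof.
move=> hj; apply: (@psif_ge1 n j (y j)).
have [v [hv pv]] := @private_exists n j alpha.
by rewrite -pv; apply: Hmax.
Qed.

Lemma cnt1 n (y : assignment n (mm n)) alpha
  (Hmax : forall j, y j <> alpha -> forall v, v <> alpha -> @psif R n j v <= @psif R n j (y j))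
  j : y j <> alpha -> cnt y (y j) = 1%N.
Proof.
move=> hj; rewrite /cnt (_ : [set i | y i == y j] = [set j]) ?cards1 //.
apply/setP => i; rewrite !inE; apply/eqP/eqP => [hij|->] //.
have hi : y i <> alpha by rewrite hij.
move: (@forced n y alpha Hmax i hi) (@forced n y alpha Hmax j hj) => /andP[_ /eqP a1] /andP[_ /eqP a2].
by apply: val_inj; rewrite /= -a1 -a2 hij.
Qed.

Lemma cnt_le n m (y : assignment n m) v : (cnt y v <= n)%N.
Proof. by rewrite /cnt; apply: leq_trans (max_card _) _; rewrite card_ord. Qed.

Lemma lamln_le1 n (c : nat) : (c <= n)%N -> lamf R n * ln (c%:R : R) <= 1.
Proof.
move=> hc.
have hL : 0 < ln (n.+2%:R : R) by rewrite ln_gt0 // ltr1n.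
rewrite /lamf mulrC ler_pdivrMr // mul1r.
case: c hc => [|c] hc.
  by rewrite ln0 // ltW.
rewrite ler_ln ?posrE ?ltr0n // ler_nat; lia.
Qed.


Lemma sum_psi_alpha n (alpha : 'I_(mm n)) : (0 < sz n)%N ->
  \sum_(j : 'I_n) @psif R n j alpha <= (sz n)%:R.
Proof.
move=> hs; have [ha|ha] := boolP (alpha < 2*n)%N.
- rewrite (eq_bigr (fun j : 'I_n => if (alpha %% n == j)%N then (1:R) else 0)); last first.
    by move=> j _; rewrite /psif ha.
  have hn : (0 < n)%N by lia.
  pose j0 : 'I_n := Ordinal (ltn_pmod alpha hn).
  rewrite (bigD1 j0) //= eqxx big1 ?addr0 ?ler1n //.
  move=> j hj; case: eqP => // e; exfalso; move/negP: hj; apply.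
  by apply/eqP/val_inj => /=; rewrite e.
- set i := (alpha - 2 * n)%N.
  rewrite (eq_bigr (fun j : 'I_n => if (j %/ sz n == i)%N then aa R n else 0)); last first.
    by move=> j _; rewrite /psif (negbTE ha).
  apply: (@le_trans _ _ (\sum_(j : 'I_n) (if (j %/ sz n == i)%N then 1 else 0))).
    apply: ler_sum => j _; case: ifP => _ //; exact: ltW (aa_lt1 _).
  rewrite -big_mkcond sumr_const ler_nat.
  pose f (j : 'I_n) : 'I_(sz n) := Ordinal (ltn_pmod j hs).
  rewrite -(@card_in_imset _ _ f).
    by apply: leq_trans (max_card _) _; rewrite card_ord.
  move=> x y; rewrite !unfold_in /= => /eqP hx /eqP hy [hf].
  apply: val_inj; rewrite /= (divn_eq x (sz n)) (divn_eq y (sz n)) hx hy hf //.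
Qed.

Lemma cand_bound n (y : assignment n (mm n)) : (0 < sz n)%N ->
  alphapass_candidate (@psif R n) y ->
  score (@psif R n) (lamf R n) y <= n%:R + (sz n)%:R.
Proof.
move=> hs [alpha [k [_ _ _ Hmax]]].
rewrite score_vertex.
apply: (@le_trans _ _ (\sum_(j : 'I_n) (1 + @psif R n j alpha))).
  apply: ler_sum => j _.
  case: (eqVneq (y j) alpha) => [e|ne].
    rewrite e addrC lerD2r; apply: lamln_le1; exact: cnt_le.
  rewrite (@cnt1 n y alpha Hmax j (elimN eqP ne)) ln1 mulr0 addr0.
  apply: (@le_trans _ _ 1); first exact: psif_le1.
  by rewrite lerDl psif_ge0.
rewrite big_split /= sumr_const card_ord lerD2l.
exact: sum_psi_alpha.
Qed.


Definition xopt n : assignment n (mm n) :=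
  [ffun j : 'I_n => if (j < gg n * sz n)%N then inord (2*n + j %/ sz n) else inord j].

Lemma grp_lt n (j : 'I_n) r : (0 < sz n)%N -> (gg n * sz n <= n)%N ->
  (j < gg n * sz n)%N -> (r < sz n)%N -> (j %/ sz n * sz n + r < gg n * sz n)%N.
Proof.
move=> hs hgs hj hr.
have h1 : (j %/ sz n < gg n)%N by rewrite ltn_divLR.
have h2 : ((j %/ sz n).+1 * sz n <= gg n * sz n)%N by rewrite leq_mul2r h1 orbT.
rewrite mulSn in h2; lia.
Qed.

Lemma xopt_val n (j : 'I_n) : (0 < sz n)%N -> (gg n * sz n <= n)%N ->
  nat_of_ord (xopt n j) = if (j < gg n * sz n)%N then (2*n + j %/ sz n)%N else nat_of_ord j.
Proof.
move=> hs hgs; rewrite /xopt ffunE; case: ifP => hj.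
  apply: inordK; rewrite ltnS leq_add2l; apply: ltnW; by rewrite ltn_divLR.
apply: inordK; rewrite ltnS; have := ltn_ord j; lia.
Qed.

Lemma opt_term n (j : 'I_n) : (0 < sz n)%N -> (gg n * sz n <= n)%N ->
  aa R n + (if (j < gg n * sz n)%N then lamf R n * ln ((sz n)%:R) else 0)
  <= @psif R n j (xopt n j) + lamf R n * ln ((cnt (xopt n) (xopt n j))%:R).
Proof.
move=> hs hgs; have hxv := @xopt_val n j hs hgs.
have hc1 : (0 < cnt (xopt n) (xopt n j))%N.
  by rewrite /cnt card_gt0; apply/set0Pn; exists j; rewrite inE.
case: ifP hxv => hj hxv.
- apply: lerD.
    by rewrite /psif hxv ltnNge leq_addr /= addKn eqxx.
  rewrite ler_pM2l ?lam_gt0 // ler_ln ?posrE ?ltr0n // ler_nat.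
  pose f (r : 'I_(sz n)) : 'I_n :=
    Ordinal (leq_trans (@grp_lt n j r hs hgs hj (ltn_ord r)) hgs).
  have finj : injective f by move=> r1 r2 [] /addnI e; apply: val_inj.
  rewrite /cnt -{1}(card_ord (sz n)) -cardsT -(card_in_imset (f:=f)); last first.
    by move=> r1 r2 _ _; apply: finj.
  apply: subset_leq_card; apply/subsetP => i /imsetP [r _ ->]; rewrite inE.
  apply/eqP/ord_inj; rewrite xopt_val // hxv /= ifT; last exact: grp_lt.
  by rewrite divnMDl // (divn_small (ltn_ord r)) addn0.
- have h1 : aa R n <= @psif R n j (xopt n j).
    rewrite /psif hxv ifT; last by have := ltn_ord j; lia.
    rewrite modn_small // eqxx; exact: ltW (aa_lt1 _).
  have h2 : 0 <= lamf R n * ln ((cnt (xopt n) (xopt n j))%:R).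
    apply: mulr_ge0; first exact: ltW (lam_gt0 _).
    by apply: ln_ge0; rewrite ler1n.
  exact: lerD h1 h2.
Qed.

Lemma opt_bound n : (0 < sz n)%N -> (gg n * sz n <= n)%N ->
  n%:R * aa R n + (gg n * sz n)%:R * (lamf R n * ln ((sz n)%:R))
  <= score (@psif R n) (lamf R n) (xopt n).
Proof.
move=> hs hgs; rewrite score_vertex.
apply: le_trans (ler_sum _ (fun j _ => @opt_term n j hs hgs)).
rewrite big_split /= sumr_const card_ord; apply: lerD.
  by rewrite mulr_natl.
set L := lamf R n * ln (sz n)%:R.
have -> : \sum_(i < n) (if (i < gg n * sz n)%N then L else 0) = \sum_(i < gg n * sz n) L.
  rewrite (big_ord_widen _ (fun _ => L) hgs) big_mkcond. by rewrite [RHS]big_mkcond.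
by rewrite sumr_const cardT size_enum_ord mulr_natl.
Qed.


Lemma lnbound n (g s : nat) : (0 < g)%N -> (0 < s)%N -> ((4*g)^g <= n)%N ->
  (n.+2 <= 4 * g * s)%N -> 1 - (g%:R)^-1 <= lamf R n * ln (s%:R : R).
Proof.
move=> hg hs hp hn.
have hL : 0 < ln (n.+2%:R : R) by rewrite ln_gt0 // ltr1n.
have hG : 0 < (g%:R : R) by rewrite ltr0n.
have p4 : (0 < 4 * g)%N by rewrite muln_gt0 hg.
have A : ln (n.+2%:R : R) <= ln ((4*g)%:R) + ln (s%:R).
  have e : ln ((4*g)%:R : R) + ln (s%:R) = ln ((4*g*s)%:R).
    by rewrite [in RHS](natrM R (4*g) s) lnM // posrE ltr0n.
  rewrite e ler_ln; last 2 first.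
  - by rewrite posrE ltr0n.
  - by rewrite posrE ltr0n muln_gt0 p4 hs.
  rewrite ler_nat; lia.
have B : ln ((4*g)%:R : R) * g%:R <= ln (n.+2%:R : R).
  have e2 : ln ((4*g)%:R : R) * g%:R = ln (((4*g)^g)%:R).
    by rewrite mulr_natr natrX lnXn // ltr0n.
  rewrite e2 ler_ln; last 2 first.
  - by rewrite posrE ltr0n expn_gt0 p4.
  - by rewrite posrE ltr0n.
  rewrite ler_nat; lia.
have hx : ln ((4*g)%:R : R) <= ln (n.+2%:R : R) / g%:R.
  by rewrite ler_pdivlMr.
rewrite /lamf mulrC ler_pdivlMr // mulrBl mul1r.
rewrite mulrC in hx; lra.
Qed.

End S.

Theorem theorem8 (R : realType) :
  exists (m : nat -> nat) (psi : forall n : nat, 'I_n -> 'I_(m n) -> R)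
         (lam : nat -> R),
    (forall n, 0 < lam n) /\
    (forall n (j : 'I_n) (v : 'I_(m n)), 0 <= psi n j v) /\
    (forall eps : R, 0 < eps -> exists N : nat, forall n : nat, (N <= n)%N ->
       exists xopt : assignment n (m n),
         0 < score (psi n) (lam n) xopt /\
         forall y : assignment n (m n), alphapass_candidate (psi n) y ->
           score (psi n) (lam n) y <= (1 / 2 + eps) * score (psi n) (lam n) xopt).
Proof.
exists mm, (@psif R), (@lamf R); split; first exact: lam_gt0.
split; first exact: psif_ge0.
move=> eps heps.
set e := Num.min eps 1.
have he0 : 0 < e by rewrite lt_min heps ltr01.
have he1 : e <= 1 by rewrite ge_min lexx orbT.
have hee : e <= eps by rewrite ge_min lexx.
pose G := maxn (Num.truncn (3 / e)).+1 2.
have hG2 : (2 <= G)%N by rewrite leq_maxr.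
have hGe : 3 / e < G%:R.
  by apply: (lt_le_trans (truncnS_gt _)); rewrite ler_nat leq_maxl.
exists ((4 * G) ^ G)%N; move=> n hn.
set g := gg n.
have hGn : (G <= n)%N.
  apply: leq_trans hn; apply: ltnW; apply: ltn_expl; lia.
have hgG : (G <= g)%N by apply: gg_ge.
have hg2 : (2 <= g)%N by apply: leq_trans hgG.
have hgp : ((4 * g) ^ g <= n)%N by case: (gg_spec n) => // h; rewrite -/g in h; lia.
have hg16 : ((4 * g) ^ 2 <= n)%N.
  by apply: leq_trans hgp; apply: leq_pexp2l; lia.
have hgn : (g * g <= n)%N.
  apply: leq_trans hg16; rewrite (expnS _ 1) expn1; apply: leq_mul; lia.
set s := sz n.
have hgle : (g <= n)%N by apply: leq_trans hgn; rewrite leq_pmulr //; lia.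
have hs : (0 < s)%N by rewrite /s /sz -/g divn_gt0 //; lia.
have hgs : (g * s <= n)%N by rewrite mulnC leq_divM.
have hnc : (n < g * s + g)%N.
  have := @ltn_ceil n g (ltn_trans (isT : 0 < 1)%N hg2).
  rewrite (_ : (n %/ g = s)%N) // mulSn (mulnC s g); lia.
have hn2 : (n.+2 <= 4 * g * s)%N.
  have : (g <= g * s)%N by rewrite leq_pmulr.
  rewrite -mulnA; lia.
have Hln := @lnbound R n g s ltac:(lia) hs hgp hn2.
have Hopt := @opt_bound R n hs hgs.
rewrite -/g -/s in Hopt.
set Nr := (n%:R : R). set Gr := (g%:R : R). set Sr := (s%:R : R).
have hGr : 2 <= Gr by rewrite ler_nat.
have hSr : 1 <= Sr by rewrite ler1n.
have hGS : Gr * Sr <= Nr by rewrite -natrM ler_nat.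
have hGG : Gr * Gr <= Nr by rewrite -natrM ler_nat.
have hNc : Nr < Gr * Sr + Gr by rewrite -natrM -natrD ltr_nat.
have heG : 3 <= e * Gr.
  have : (G%:R : R) <= Gr by rewrite ler_nat.
  move: hGe; rewrite ltr_pdivrMr // => h1 h2.
  rewrite mulrC; apply: ltW; apply: lt_le_trans h1 _; rewrite ler_pM2r //.
have haa : Nr - 1 <= Nr * aa R n.
  rewrite /aa mulrBr mulr1 lerD2l lerN2 -/Nr.
  rewrite ler_pdivrMr ?ltr0n // mul1r /Nr ler_nat //.
have hGinv : Gr * Gr^-1 = 1 by rewrite divff // gt_eqF //; lra.
have hnatgs : ((g * s)%:R : R) = Gr * Sr by rewrite natrM.
rewrite hnatgs in Hopt.
set O := score (@psif R n) (lamf R n) (xopt n) in Hopt *.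
have Hlow : Nr - 1 + Gr * Sr - Sr <= O.
  apply: le_trans Hopt.
  have : Gr * Sr * (1 - Gr^-1) <= Gr * Sr * (lamf R n * ln Sr).
    by rewrite ler_pM2l // mulr_gt0 //; lra.
  rewrite mulrBr mulr1 (mulrC Gr Sr) -mulrA hGinv mulr1; lra.
have Hpos : 0 < O by nra.
exists (xopt n); split => // y hy.
have Hc := @cand_bound R n y hs hy; rewrite -/s -/Sr -/Nr in Hc.
apply: le_trans Hc _.
apply: (@le_trans _ _ ((1/2 + e) * O)); last by rewrite ler_pM2r // lerD2l.
apply: (@le_trans _ _ ((1/2 + e) * (Nr - 1 + Gr * Sr - Sr))); last first.
  by rewrite ler_pM2l //; lra.
have hGp : 0 < Gr by lra.
rewrite -(ler_pM2l hGp).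
nra.
Qed.
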